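(* Let $\mathcal{N} = (W,(R_{a})_{a\in Ag},(Q_{a})_{a \in Ag},v)$ be a proper relational model for introspective knowledge and belief over $Ag$, and let $\mathcal{M}_{\mathcal{N}}$ and $f: W \to \mathcal{F}(S_{\mathcal{N}})$ be as constructed below. Then for all formulas $\phi \in \mathcal{L}_{KB}(Ag)$ and all $w \in W$: $\mathcal{N},w\models\phi$ if and only if $\mathcal{M}_{\mathcal{N}},f(w)\models\phi$.
   Context: $Ag$ is a finite set of agents, $\mathfrak{P}$ a countable set of atoms. A relational model for introspective knowledge and belief is $(W,(R_{a}),(Q_{a}),v)$ with $W$ nonempty, each $R_{a}$ an equivalence relation on $W$ (class of $w$ written $[w]_{a}$), each $Q_{a} \subseteq R_{a}$ serial and constant on $R_{a}$-classes (if $wR_{a}w'$ then $Q_{a}(w)=Q_{a}(w')$, where $Q_{a}(w)=\{u : wQ_{a}u\}$), and $v:\mathfrak{P}\to 2^{W}$. It is proper if $|\bigcap_{a\in Ag}[w]_{a}|=1$ for all $w$. Relational semantics: $w\models P$ iff $w\in v(P)$; $\bot$ false; implication classical; $w\models K_{a}\phi$ iff $w'\models\phi$ for all $w'$ with $wR_{a}w'$; $w\models B_{a}\phi$ iff $w'\models\phi$ for all $w'$ with $wQ_{a}w'$. Construction: $N_{\mathcal{N}}=\{([w]_{a},a): w\in W, a\in Ag\}$; $V_{\mathcal{N}}([w]_{a},a)=a$; $e$ is projection to the first coordinate; $S_{\mathcal{N}}=\{F\subseteq N_{\mathcal{N}} : \bigcap_{n\in F}e(n)\neq\emptyset\}$;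 $f(w)=\{([w]_{a},a): a\in Ag\}$, which is a bijection $W\to\mathcal{F}(S_{\mathcal{N}})$ by properness; $L_{\mathcal{N}}(P)=\{f(w): w\in v(P)\}$; for each $a$, $S_{\mathcal{N},a}$ is the simplicial complex whose facets are $\{F\in\mathcal{F}(S_{\mathcal{N}}) : f^{-1}(F)\,Q_{a}\,f^{-1}(F)\}$ (i.e. all subsets of these facets); $\mathcal{M}_{\mathcal{N}}=(N_{\mathcal{N}},V_{\mathcal{N}},S_{\mathcal{N}},\{S_{\mathcal{N},a}\}_{a\in Ag},L_{\mathcal{N}})$. Simplicial semantics at a facet $X$ of $S_{\mathcal{N}}$, with $\pi_{a}(X)$ the unique $a$-colored node of $X$: $X\models P$ iff $X\in L_{\mathcal{N}}(P)$; $\bot$ false; implication classical; $X\models K_{a}\phi$ iff $Y\models\phi$ for all facets $Y$ of $S_{\mathcal{N}}$ with $\pi_{a}(Y)=\pi_{a}(X)$; $X\models B_{a}\phi$ iff $Y\models\phi$ for all facets $Y$ of $S_{\mathcal{N},a}$ with $\pi_{a}(Y)=\pi_{a}(X)$. The language $\mathcal{L}_{KB}(Ag)$ is $\phi ::= P\mid\bot\mid\phi\rightarrow\psi\mid K_{a}\phi\mid B_{a}\phi$. *)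

(* Defs.v *)
From mathcomp Require Import all_boot.
Unset Printing Implicit Defensive.

Inductive formula (Ag : Type) (Atom : Type) : Type :=
  | fAtom : Atom -> formula Ag Atom
  | fBot : formula Ag Atom
  | fImp : formula Ag Atom -> formula Ag Atom -> formula Ag Atom
  | fK : Ag -> formula Ag Atom -> formula Ag Atom
  | fB : Ag -> formula Ag Atom -> formula Ag Atom.
Arguments fBot {Ag Atom}.

Record relmodel (Ag : finType) (Atom : countType) := RelModel {
  rW : Type;
  rW_nonempty : inhabited rW;
  rR : Ag -> rW -> rW -> Prop;
  rQ : Ag -> rW -> rW -> Prop;
  rv : Atom -> rW -> Prop;
  rR_refl : forall a w, rR a w w;
  rR_sym : forall a w u, rR a w u -> rR a u w;
  rR_trans : forall a w u x, rR a w u -> rR a u x -> rR a w x;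
  rQ_sub : forall a w u, rQ a w u -> rR a w u;
  rQ_serial : forall a w, exists u, rQ a w u;
  rQ_const : forall a w w', rR a w w' -> forall u, rQ a w u <-> rQ a w' u
}.
Arguments rW {Ag Atom} _.
Arguments rR {Ag Atom} _ _ _ _.
Arguments rQ {Ag Atom} _ _ _ _.
Arguments rv {Ag Atom} _ _ _.

Definition rclass {Ag : finType} {Atom : countType} (N : relmodel Ag Atom)
  (a : Ag) (w : rW N) : rW N -> Prop := fun u => rR N a w u.

Definition proper_model {Ag : finType} {Atom : countType} (N : relmodel Ag Atom) : Prop :=
  forall w : rW N, exists! u : rW N, forall a : Ag, rclass N a w u.

Fixpoint rsat {Ag : finType} {Atom : countType} (N : relmodel Ag Atom)
  (w : rW N) (phi : formula Ag Atom) : Prop :=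
  match phi with
  | fAtom P => rv N P w
  | fBot => False
  | fImp p q => rsat N w p -> rsat N w q
  | fK a p => forall w', rR N a w w' -> rsat N w' p
  | fB a p => forall w', rQ N a w w' -> rsat N w' p
  end.

(* A (chromatic) simplicial model with nodes of type sN, coloring sV,
   complex sS (a set of simplices, a simplex being a set of nodes),
   per-agent subcomplexes sSa, and valuation sL (a set of facets per atom). *)
Record simpmodel (Ag : finType) (Atom : countType) := SimpModel {
  sN : Type;
  sV : sN -> Ag;
  sS : (sN -> Prop) -> Prop;
  sSa : Ag -> (sN -> Prop) -> Prop;
  sL : Atom -> (sN -> Prop) -> Prop
}.
Arguments sN {Ag Atom} _.
Arguments sV {Ag Atom} _ _.
Arguments sS {Ag Atom} _ _.
Arguments sSa {Ag Atom} _ _ _.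
Arguments sL {Ag Atom} _ _ _.

Definition subset_of {T : Type} (X Y : T -> Prop) : Prop := forall x, X x -> Y x.

Definition facet {T : Type} (C : (T -> Prop) -> Prop) (X : T -> Prop) : Prop :=
  C X /\ forall Y, C Y -> subset_of X Y -> subset_of Y X.

(* pi_a(X) = pi_a(Y): X and Y have the same (unique) a-colored node,
   i.e. they share an a-colored node. *)
Definition same_pi {Ag : finType} {Atom : countType} (M : simpmodel Ag Atom)
  (a : Ag) (X Y : sN M -> Prop) : Prop :=
  exists n : sN M, sV M n = a /\ X n /\ Y n.

Fixpoint ssat {Ag : finType} {Atom : countType} (M : simpmodel Ag Atom)
  (X : sN M -> Prop) (phi : formula Ag Atom) : Prop :=
  match phi with
  | fAtom P => sL M P X
  | fBot => False
  | fImp p q => ssat M X p -> ssat M X q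
  | fK a p => forall Y, facet (sS M) Y -> same_pi M a Y X -> ssat M Y p
  | fB a p => forall Y, facet (sSa M a) Y -> same_pi M a Y X -> ssat M Y p
  end.

Section Construction.
Variables (Ag : finType) (Atom : countType) (N : relmodel Ag Atom).

Definition cnode : Type :=
  { p : (rW N -> Prop) * Ag | exists w : rW N, p.1 = rclass N p.2 w }.

Definition cV (n : cnode) : Ag := (sval n).2.
Definition ce (n : cnode) : rW N -> Prop := (sval n).1.

Definition cS (F : cnode -> Prop) : Prop :=
  exists w : rW N, forall n, F n -> ce n w.

Definition cf (w : rW N) : cnode -> Prop := fun n => sval n = (rclass N (cV n) w, cV n).

Definition cL (P : Atom) (X : cnode -> Prop) : Prop :=
  exists w, rv N P w /\ X = cf w.

(* S_{N,a}: all subsets of the facets F of S_N with f^{-1}(F) Q_a f^{-1}(F)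
   (f is a bijection W -> F(S_N), so f^{-1}(F) Q_a f^{-1}(F) means
    F = f(w) for some w with w Q_a w) *)
Definition cSa (a : Ag) (G : cnode -> Prop) : Prop :=
  exists F, facet cS F /\ (exists w, F = cf w /\ rQ N a w w) /\ subset_of G F.

Definition MN : simpmodel Ag Atom := @SimpModel Ag Atom cnode cV cS cSa cL.
End Construction.
Arguments cf {Ag Atom} _ _ _.
Arguments MN {Ag Atom} _.

(* Main.v *)
Require Import Defs.
From mathcomp Require Import all_boot.
From Stdlib Require Import FunctionalExtensionality PropExtensionality.

Arguments rR_trans {Ag Atom r a w u x}.
Arguments rR_sym {Ag Atom r a w u}.
Arguments rR_refl {Ag Atom} r a w.
Arguments rQ_sub {Ag Atom r a w u}.
Arguments rQ_const {Ag Atom r a w w'} _ u.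

Section Aux.
Variables (Ag : finType) (Atom : countType) (N : relmodel Ag Atom).
Hypothesis Hp : proper_model N.

Definition node_of (a : Ag) (w : rW N) : cnode Ag Atom N :=
  exist _ (rclass N a w, a) (ex_intro _ w erefl).

Lemma rclass_eq {a w u} : rR N a w u -> rclass N a w = rclass N a u.
Proof.
move=> H; apply: functional_extensionality => x; apply: propositional_extensionality.
rewrite /rclass; split => Hx.
- exact: rR_trans (rR_sym H) Hx.
- exact: rR_trans H Hx.
Qed.

Lemma rclass_eq_inv {a w u} : rclass N a w = rclass N a u -> rR N a w u.
Proof.
move=> H; have := equal_f H u; rewrite /rclass => ->; exact: rR_refl.
Qed.

Lemma sub_cf w u : (forall n, cf N w n -> cf N u n) -> w = u.
Proof.
move=> H.
have Hr : forall a, rR N a w u.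
  move=> a; have := H (node_of a w) erefl; rewrite /cf /= => [[E]].
  exact: rclass_eq_inv.
have [z [Hz Hu]] := Hp w.
rewrite -(Hu w) ?(Hu u) //; move=> a; exact: rR_refl.
Qed.

Lemma cS_sub (F : cnode Ag Atom N -> Prop) x : (forall n, F n -> ce Ag Atom N n x) -> forall n, F n -> cf N x n.
Proof.
move=> H [[S b] [z Hz]] Fn; have := H _ Fn.
rewrite /ce /cf /cV /=; simpl in Hz; subst S => Hx.
by rewrite (rclass_eq Hx).
Qed.

Lemma cS_cf u : cS Ag Atom N (cf N u).
Proof.
exists u => n; rewrite /cf /ce => ->; exact: rR_refl.
Qed.

Lemma pred_ext (T : Type) (X Y : T -> Prop) :
  subset_of X Y -> subset_of Y X -> X = Y.
Proof.
move=> H1 H2; apply: functional_extensionality => x;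
apply: propositional_extensionality; split; [exact: H1|exact: H2].
Qed.

Lemma cf_facet u : facet (cS Ag Atom N) (cf N u).
Proof.
split; first exact: cS_cf.
move=> Y [x Hx] Hsub n Yn.
have Hs := cS_sub _ _ Hx.
have Eux : u = x by apply: sub_cf => m Hm; apply: Hs; apply: Hsub.
subst x; exact: Hs.
Qed.

Lemma facet_cf F : facet (cS Ag Atom N) F -> exists u, F = cf N u.
Proof.
move=> [[x Hx] Hmax]; exists x.
have Hs := cS_sub _ _ Hx.
apply: pred_ext => //; exact: Hmax (cS_cf x) Hs.
Qed.

Lemma same_pi_cf a u w : same_pi (MN N) a (cf N u) (cf N w) <-> rR N a w u.
Proof.
split.
- move=> [n [Ha [Hu Hw]]]; rewrite /cf in Hu Hw; rewrite Hu in Hw.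
  case: Hw => E; subst a; exact: rclass_eq_inv (esym E).
- move=> H; exists (node_of a w); split => //; split => //=.
  by rewrite /cf /= (rclass_eq H).
Qed.

Lemma cSa_facet a F : facet (cSa Ag Atom N a) F <-> exists u, F = cf N u /\ rQ N a u u.
Proof.
split.
- move=> [[G [HG [[x [Ex Hq]] Hsub]]] Hmax]; exists x; split => //.
  subst G; apply: pred_ext => //; apply: Hmax => //.
  exists (cf N x); split; [exact: cf_facet|split; [by exists x|by []]].
- move=> [u [-> Hq]]; split.
  + exists (cf N u); split; [exact: cf_facet|split; [by exists u|by []]].
  + move=> Y [G [HG [[y [Ey Hqy]] Hsub]]] HY.
    subst G.
    have Euy : u = y by apply: sub_cf => m Hm; apply: Hsub; apply: HY.
    by subst y.
Qed.

End Aux.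
Arguments sub_cf {Ag Atom N} Hp w u _.
Arguments facet_cf {Ag Atom N} F _.
Arguments cSa_facet {Ag Atom N} Hp a F.
Arguments same_pi_cf {Ag Atom N} a u w.

Theorem lemma6 (Ag : finType) (Atom : countType) (N : relmodel Ag Atom) :
  proper_model N ->
  forall (phi : formula Ag Atom) (w : rW N),
    rsat N w phi <-> ssat (MN N) (cf N w) phi.
Proof.
move=> Hp phi; elim: phi => [P||p IHp q IHq|a p IH|a p IH] w /=.
- split; first by move=> H; exists w.
  by move=> [u [Hu E]]; rewrite (sub_cf Hp w u) // E.
- by [].
- by rewrite IHp IHq.
- split.
  + move=> H Y HY Hpi; have [u Eu] := facet_cf _ HY; subst Y.
    apply/IH; apply: H; exact/(same_pi_cf _ _ _).1.
  + move=> H u Hr; apply/IH; apply: H; first exact: cf_facet.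
    exact/(same_pi_cf _ _ _).2.
- split.
  + move=> H Y HY Hpi; have [u [Eu Hq]] := (cSa_facet Hp a Y).1 HY; subst Y.
    have Hr := (same_pi_cf _ _ _).1 Hpi.
    apply/IH; apply: H; exact: (rQ_const Hr u).2 Hq.
  + move=> H u Hq; apply/IH; apply: H.
    * apply/(cSa_facet Hp); exists u; split => //.
      exact: (rQ_const (rQ_sub Hq) u).1 Hq.
    * exact/(same_pi_cf _ _ _).2/rQ_sub.
Qed.
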